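(* Fix $V>0$. For $x\in\mathbb N$ let $\delta=V/x$ and consider the discrete first-price auction with $n=2$ bidders, in the model without ties, with values drawn independently and uniformly from $X_\delta=\{0,\delta,2\delta,\dots,x\delta=V\}$ and bids in $X_\delta$. Let $\beta_\delta$ be any symmetric equilibrium of this game. Then $\max_{v\in X_\delta}|\beta_\delta(v)-v/2|\le\delta/2$, so $\beta_\delta$ converges uniformly to the continuous equilibrium bidding function $v\mapsto v/2$ as $\delta\to0$; and the expected highest bid $\mathbb E[\max\{\beta_\delta(v_1),\beta_\delta(v_2)\}]$ converges, as $\delta\to0$, to $V/3$, the expected highest bid in the continuous first-price auction with two bidders whose values are i.i.d. uniform on $[0,V]$ and who bid $v/2$.
   Context: Model. Two risk-neutral bidders compete for one indivisible object. Values and bids lie in $X_\delta$; values are i.i.d. uniform on $X_\delta$. A strategy is a bidding function $\beta:X_\delta\to X_\delta$. In the model without ties, a bidder wins iff their bid is strictly higher than the opponent's (if tied, nobody wins). In the first-price auction, a bidder with value $v_i$ bidding $b_i$ gets expected payoff $(v_i-b_i)\Pr(i\text{ wins})$. An equilibrium is a profile of bidding functions such that each bidder's bidding function maximises their expected payoff given the other's (a pure-strategy Bayes–Nash equilibrium) and such that no bidder uses a weakly dominated bidding function (a bidding function is weakly dominated if some other bidding function yields at least as high expected payoff against every opponent bidding function, and strictly higher against some). A symmetric equilibrium is an equilibrium in which both bidders use the same bidding function. *)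

(* Defs.v *)
From HB Require Import structures.
From mathcomp Require Import all_boot all_order all_algebra.
From mathcomp Require Import all_classical all_reals all_analysis.
Set Implicit Arguments. Unset Strict Implicit. Unset Printing Implicit Defensive.
Import Order.TTheory GRing.Theory Num.Theory.
Local Open Scope ring_scope.

(* Grid X_delta = {0, delta, ..., x*delta = V}, delta = V/x, indexed by 'I_x.+1:
   index k stands for the value/bid k*delta. *)
Definition grid (R : realType) (V : R) (x : nat) (k : 'I_x.+1) : R :=
  k%:R * (V / x%:R).

(* A (pure) bidding function X_delta -> X_delta, in index form. *)
Definition strategy (x : nat) := 'I_x.+1 -> 'I_x.+1.

(* Probability that a bid b strictly beats the opponent's bid when the opponent
   uses gamma and his value is uniform on the grid (model without ties). *)
Definition winprob (R : realType) (x : nat) (gamma : strategy x) (b : 'I_x.+1) : R :=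
  #|[set i : 'I_x.+1 | (gamma i < b)%N]|%:R / x.+1%:R.

Definition payoff (R : realType) (V : R) (x : nat) (beta gamma : strategy x) : R :=
  \sum_(v : 'I_x.+1)
     (x.+1%:R)^-1 * ((grid V v - grid V (beta v)) * winprob R gamma (beta v)).

Definition best_response (R : realType) (V : R) (x : nat) (beta gamma : strategy x) :=
  forall beta' : strategy x, payoff V beta' gamma <= payoff V beta gamma.

Definition weakly_dominated (R : realType) (V : R) (x : nat) (beta : strategy x) :=
  exists beta' : strategy x,
    (forall gamma : strategy x, payoff V beta gamma <= payoff V beta' gamma) /\
    (exists gamma : strategy x, payoff V beta gamma < payoff V beta' gamma).

Definition sym_equilibrium (R : realType) (V : R) (x : nat) (beta : strategy x) :=
  best_response V beta beta /\ ~ weakly_dominated V beta.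

Definition exp_highest_bid (R : realType) (V : R) (x : nat) (beta : strategy x) : R :=
  \sum_(v1 : 'I_x.+1) \sum_(v2 : 'I_x.+1)
     (x.+1%:R ^+ 2)^-1 * Num.max (grid V (beta v1)) (grid V (beta v2)).

(* Main.v *)
Require Import Defs.
From HB Require Import structures.
From mathcomp Require Import all_boot all_order all_algebra.
From mathcomp Require Import all_classical all_reals all_analysis.
From mathcomp Require Import zify ring lra.
Import Order.TTheory GRing.Theory Num.Theory.
Set Implicit Arguments. Unset Strict Implicit. Unset Printing Implicit Defensive.


Definition Fc (x : nat) (B : nat -> nat) (b : nat) := count (fun i => B i < b) (iota 0 x.+1).

Lemma Fc_split x B b b' : b <= b' ->
  Fc x B b' = Fc x B b + count (fun i => (b <= B i) && (B i < b')) (iota 0 x.+1).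
Proof.
move=> hbb; rewrite /Fc -count_predUI.
have -> : count (predI (fun i => B i < b) (fun i => (b <= B i) && (B i < b'))) (iota 0 x.+1) = 0.
  apply/eqP; rewrite -leqn0 leqNgt -has_count; apply/hasP => -[i _ /=]; lia.
rewrite addn0; apply: eq_count => i /=; lia.
Qed.

Lemma Fc_size x B b : Fc x B b <= x.+1.
Proof. by have := count_size (fun i => B i < b) (iota 0 x.+1); rewrite size_iota. Qed.

Section Core.
Variables (x : nat) (B : nat -> nat).
Hypothesis Hle : forall i, i <= x -> B i <= i.
Hypothesis HBR : forall v b, v <= x -> b <= v -> (v - b) * Fc x B b <= (v - B v) * Fc x B (B v).
Notation F := (Fc x B).

Lemma mono v w : v < w -> w <= x -> B v <= B w.
Proof.
move=> hvw hw; rewrite leqNgt; apply/negP => hlt.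
have hlt2 : F (B w) < F (B v).
  rewrite (Fc_split _ _ (ltnW hlt)) -[X in X < _]addn0 ltn_add2l -has_count.
  apply/hasP; exists w; first by rewrite mem_iota; lia.
  by rewrite leqnn hlt.
have h1 := HBR (v:=v) (b:=B w) ltac:(lia) ltac:(have := Hle (i:=v); lia).
have h2 := HBR (v:=w) (b:=B v) hw ltac:(have := Hle (i:=v); lia).
have := Hle (i:=v); nia.
Qed.
Lemma Kle i b : i <= x -> B i < b -> i < F b.
Proof.
move=> hi hb; rewrite /Fc.
have -> : x.+1 = i.+1 + (x - i) by lia.
rewrite iotaD count_cat.
have -> : count (fun i0 => B i0 < b) (iota 0 i.+1) = i.+1.
  rewrite (@eq_in_count _ _ predT) ?count_predT ?size_iota // => j.
  rewrite mem_iota => hj /=.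
  case: (ltngtP j i) => hji; first by have := mono hji hi; lia.
  - lia.
  - by rewrite hji.
lia.
Qed.

Lemma Kge i b : i <= x -> b <= B i -> F b <= i.
Proof.
move=> hi hb; rewrite /Fc.
have -> : x.+1 = i + (x.+1 - i) by lia.
rewrite iotaD count_cat.
have -> : count (fun i0 => B i0 < b) (iota (0 + i) (x.+1 - i)) = 0.
  apply/eqP; rewrite -leqn0 leqNgt -has_count; apply/hasP => -[j].
  rewrite mem_iota /= => hj.
  case: (ltngtP i j) => hij.
  - have := mono hij ltac:(lia); lia.
  - lia.
  - by rewrite -hij; lia.
have := count_size (fun i0 => B i0 < b) (iota 0 i); rewrite size_iota; lia.
Qed.

Lemma K i b : i <= x -> (B i < b) = (i < F b).
Proof.
move=> hi; case: (ltnP (B i) b) => h.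
  by rewrite (Kle hi h).
by apply/esym/negbTE; rewrite -leqNgt Kge.
Qed.

Lemma nogap v : v < x -> B v.+1 <= (B v).+1.
Proof.
move=> hv; rewrite leqNgt; apply/negP => hg.
have h1 := HBR (v:=v.+1) (b:=(B v).+1) hv ltac:(have := Hle (i:=v); lia).
have k1 : v < F (B v).+1 by apply: Kle; lia.
have k2 : F (B v.+1) <= v.+1 by apply: Kge.
have := Hle (i:=v.+1) hv; nia.
Qed.
Lemma F0 : F 0 = 0.
Proof. apply/eqP; rewrite -leqn0; exact: (@Kge 0 0). Qed.

Lemma upper b c : c <= x.+1 -> 0 < c -> B c.-1 = b -> 2 * b + 1 <= F b + 1 + 1 -> F b <= 2 * b ->
  F b.+1 = c -> c <= 2 * b + 2.
Proof.
move=> hc hc0 hb _ ha hF.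
case: (leqP b.+1 c.-1) => h; last lia.
have h1 := HBR (v:=c.-1) (b:=b.+1) ltac:(lia) h.
rewrite hb hF in h1.
nia.
Qed.

Lemma S b : (exists v, v <= x /\ b <= B v) -> 2 * b <= F b + 1 /\ F b <= 2 * b.
Proof.
elim: b => [|b IH] [v [hv hbv]]; first by rewrite F0.
have [ha1 ha2] := IH (ex_intro _ v (conj hv (ltnW hbv))).
set a := F b in ha1 ha2; set c := F b.+1.
have hcv : c <= v by apply: Kge.
have hBc : b < B c.
  have : ~~ (B c < b.+1) by rewrite (K (i:=c)) ?ltnn //; lia.
  lia.
have hFBc : F (B c) <= c by apply: Kge; lia.
have hBc2 := Hle (i:=c) ltac:(lia).
have h1 := HBR (v:=c) (b:=b) ltac:(lia) ltac:(lia).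
have hc1 : 2 * b + 1 <= c by nia.
have hBc1 : B c.-1 = b.
  have hng := nogap (v:=c.-1) ltac:(lia).
  have e : c.-1.+1 = c by lia.
  rewrite e in hng.
  have : B c.-1 < b.+1 by rewrite (K (i:=c.-1)); lia.
  lia.
have := @upper b c ltac:(lia) ltac:(lia) hBc1 ltac:(lia) ha2 erefl.
lia.
Qed.

Lemma core_bound v : v <= x -> 2 * B v <= v + 1 /\ v <= 2 * B v + 1.
Proof.
move=> hv.
have [ha1 ha2] := S (ex_intro _ v (conj hv (leqnn (B v)))).
have hav : F (B v) <= v by apply: Kge.
split; first lia.
set c := F (B v).+1.
have hvc : v < c by rewrite -K.
have hcn : c <= x.+1 by apply: Fc_size.
have hBc1 : B c.-1 = B v.
  have : B c.-1 < (B v).+1 by rewrite (K (i:=c.-1)); lia.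
  case: (ltngtP v c.-1) => hh; [move=> h1; have := mono hh ltac:(lia); lia | lia | by rewrite -hh].
have := @upper (B v) c hcn ltac:(lia) hBc1 ltac:(lia) ha2 erefl.
lia.
Qed.
End Core.

Local Open Scope ring_scope.

Lemma card_Fc (x : nat) (beta : strategy x) (b : nat) :
  #|[set i : 'I_x.+1 | (beta i < b)%N]| = Fc x (fun i => nat_of_ord (beta (inord i))) b.
Proof.
rewrite cardsE cardE /Fc -val_enum_ord count_map.
rewrite /enum_mem -enumT size_filter.
rewrite (@eq_filter _ _ predT) // filter_predT.
apply: eq_count => i /=; by rewrite inord_val.
Qed.



Definition upd (x : nat) (beta : strategy x) (v0 b : 'I_x.+1) : strategy x :=
  fun i => if i == v0 then b else beta i.

Lemma payoff_upd (R : realType) (V : R) (x : nat) (beta gamma : strategy x) (v0 b : 'I_x.+1) :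
  payoff V (upd beta v0 b) gamma = payoff V beta gamma +
   (x.+1%:R)^-1 * ((grid V v0 - grid V b) * winprob R gamma b
                  - (grid V v0 - grid V (beta v0)) * winprob R gamma (beta v0)).
Proof.
rewrite /payoff (bigD1 v0) //= [in RHS](bigD1 v0) //=.
rewrite /upd eqxx.
rewrite (eq_bigr (fun v => (x.+1%:R)^-1 * ((grid V v - grid V (beta v)) * winprob R gamma (beta v)))); last first.
  by move=> i /negbTE ->.
ring.
Qed.

Lemma winprobE (R : realType) (x : nat) (gamma : strategy x) (b : 'I_x.+1) :
  winprob R gamma b = (Fc x (fun i => nat_of_ord (gamma (inord i))) b)%:R / x.+1%:R.
Proof. by rewrite /winprob card_Fc. Qed.

Lemma delta_gt0 (R : realType) (V : R) (x : nat) : 0 < V -> (0 < x)%N -> 0 < V / x%:R.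
Proof. by move=> hV hx; rewrite divr_gt0 // ltr0n. Qed.

Lemma nd_le (R : realType) (V : R) (x : nat) (beta : strategy x) :
  0 < V -> (0 < x)%N -> ~ weakly_dominated V beta -> forall v, (beta v <= v)%N.
Proof.
move=> hV hx hND v; rewrite leqNgt; apply/negP => hlt; apply: hND.
have hd := delta_gt0 hV hx.
have hg : grid V v < grid V (beta v) by rewrite /grid ltr_pM2r // ltr_nat.
exists (upd beta v v); split.
  move=> gamma; rewrite payoff_upd lerDl subrr mul0r sub0r -mulNr.
  rewrite mulr_ge0 // ?invr_ge0 // mulr_ge0 // ?oppr_ge0 ?subr_le0 ?(ltW hg) //.
  by rewrite /winprob divr_ge0.
exists (fun _ => ord0); rewrite payoff_upd ltrDl subrr mul0r sub0r -mulNr.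
have -> : winprob R (fun=> ord0) (beta v) = 1.
  rewrite /winprob.
  have -> : [set i : 'I_x.+1 | (nat_of_ord (@ord0 x) < beta v)%N] = [set: 'I_x.+1]%SET.
    by apply/setP => i; rewrite !inE /=; lia.
  by rewrite cardsT card_ord divff.
by rewrite mulr1 mulr_gt0 // ?invr_gt0 // oppr_gt0 subr_lt0.
Qed.

Lemma br_nat (R : realType) (V : R) (x : nat) (beta : strategy x) :
  0 < V -> (0 < x)%N -> best_response V beta beta -> (forall v, (beta v <= v)%N) ->
  forall v b : nat, (v <= x)%N -> (b <= v)%N ->
  ((v - b) * Fc x (fun i => nat_of_ord (beta (inord i))) b <=
   (v - beta (inord v)) * Fc x (fun i => nat_of_ord (beta (inord i))) (beta (inord v)))%N.
Proof.
move=> hV hx hBR hle v b hv hb.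
have hd := delta_gt0 hV hx.
set B := (fun i => nat_of_ord (beta (inord i))).
have := hBR (upd beta (inord v) (inord b)).
rewrite payoff_upd gerDl pmulr_rle0 ?invr_gt0 // subr_le0 !winprobE /grid !inordK; try lia.
have hvv := hle (inord v); rewrite inordK in hvv; last lia.
rewrite -(ler_nat R) !natrM !natrB //.
set F1 := (Fc x _ b)%:R; set F2 := (Fc x _ _)%:R.
move=> h.
rewrite -(@ler_pM2r _ (V / x%:R / x.+1%:R)); last by rewrite divr_gt0.
set d := V / x%:R in h *.
set n := x.+1%:R in h *.
have e1 : forall p q r : R, (p * d - q * d) * (r / n) = (p - q) * r * (d / n) by move=> *; ring.
by rewrite -!e1.
Qed.

Lemma eq_bound (R : realType) (V : R) (x : nat) (beta : strategy x) :
  0 < V -> (0 < x)%N -> sym_equilibrium V beta ->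
  forall v : 'I_x.+1, (2 * beta v <= v + 1)%N /\ (v <= 2 * beta v + 1)%N.
Proof.
move=> hV hx [hBR hND] v.
have hle := nd_le hV hx hND.
have := core_bound (x:=x) (B:=fun i => nat_of_ord (beta (inord i))) _ (br_nat hV hx hBR hle) (v:=v).
rewrite inord_val; apply; last by rewrite -ltnS.
move=> i hi; have := hle (inord i); rewrite inordK //; lia.
Qed.

Lemma part1 (R : realType) (V : R) (x : nat) (beta : strategy x) :
  0 < V -> (0 < x)%N -> sym_equilibrium V beta ->
  forall v : 'I_x.+1, `|grid V (beta v) - grid V v / 2| <= (V / x%:R) / 2.
Proof.
move=> hV hx heq v.
have [h1 h2] := eq_bound hV hx heq v.
have hd := delta_gt0 hV hx.
have h1' : (2%:R * (beta v)%:R <= v%:R + 1%:R :> R).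
  have h : (muln 2 (beta v) <= addn v 1)%N by exact: h1.
  by rewrite -natrM -natrD ler_nat.
have h2' : (v%:R <= 2%:R * (beta v)%:R + 1%:R :> R).
  have h : (v <= addn (muln 2 (beta v)) 1)%N by exact: h2.
  by rewrite -natrM -natrD ler_nat.
move: h1' h2'; clear h1 h2; rewrite /grid.
set d := V / x%:R in hd *.
move=> h1 h2.
rewrite ler_norml; apply/andP; split; nra.
Qed.

Lemma summax n : (6 * \sum_(0 <= i < n.+1) \sum_(0 <= j < n.+1) maxn i j = n * n.+1 * (4*n+5))%N.
Proof.
elim: n => [|n IH]; first by rewrite !big_nat1.
rewrite big_nat_recr //=.
rewrite (eq_bigr (fun i => \sum_(0 <= j < n.+1) maxn i j + maxn i n.+1)%N); last first.
  by move=> i _; rewrite big_nat_recr.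
rewrite big_split /=.
have -> : (\sum_(0 <= i < n.+1) maxn i n.+1 = n.+1 * n.+1)%N.
  rewrite (eq_big_nat _ _ (F2 := fun _ => n.+1)); last by move=> i hi; apply/maxn_idPr; lia.
  by rewrite sum_nat_const_nat; lia.
have -> : (\sum_(0 <= j < n.+2) maxn n.+1 j = n.+2 * n.+1)%N.
  rewrite (eq_big_nat _ _ (F2 := fun _ => n.+1)); last by move=> i hi; apply/maxn_idPl; lia.
  by rewrite sum_nat_const_nat; lia.
nia.
Qed.

Lemma aux1 (R : numFieldType) (d n : R) : n != 0 -> (n^+2)^-1 * (d/2) * n * n = d/2.
Proof. move=> hn; field. by rewrite hn. Qed.
Lemma aux2 (R : realFieldType) (V xr S : R) : 0 < xr -> 6 * S = xr * (xr + 1) * (4 * xr + 5) ->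
  ((xr + 1) ^+ 2)^-1 * (V / xr / 2) * S = V / 3 + V / (12 * (xr + 1)).
Proof.
move=> hx hS.
have -> : S = xr * (xr + 1) * (4 * xr + 5) / 6 by rewrite -hS; field.
have h1 : xr != 0 by rewrite lt0r_neq0.
have h2 : xr + 1 != 0 by rewrite lt0r_neq0 //; lra.
by field; rewrite h1 h2.
Qed.
Lemma aux3 (R : realFieldType) (V xr : R) : 0 < V -> 0 < xr -> V / (12 * (xr + 1)) <= V / xr / 2.
Proof.
move=> hV hx.
have h1 : xr != 0 by rewrite lt0r_neq0.
have h2 : xr + 1 != 0 by rewrite lt0r_neq0 //; lra.
rewrite -subr_ge0.
have -> : V / xr / 2 - V / (12 * (xr + 1)) = V * (5 * xr + 6) / (12 * xr * (xr + 1)) by field; rewrite h1 h2.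
apply: divr_ge0; apply: mulr_ge0; lra.
Qed.

Lemma aux1' (R : numFieldType) (d : R) (k : nat) : (0 < k)%N ->
  (((k%:R : R) ^+ 2)^-1 * (d / 2)) *+ k *+ k = d / 2.
Proof.
move=> hk; rewrite -mulrnA -(mulr_natr (((k%:R : R) ^+ 2)^-1 * (d / 2)) (k * k)) natrM.
have hk' : (k%:R : R) != 0 by rewrite pnatr_eq0 -lt0n.
by field; rewrite hk'.
Qed.
Lemma ehb_bound (R : realType) (V : R) (x : nat) (beta : strategy x) :
  0 < V -> (0 < x)%N -> sym_equilibrium V beta ->
  `|exp_highest_bid V beta - V / 3| <= V / x%:R.
Proof.
move=> hV hx heq.
have hd := delta_gt0 hV hx.
set d := V / x%:R in hd *.
set n : R := x.+1%:R.
have hn : 0 < n by rewrite ltr0n.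
set c := (n ^+ 2)^-1.
have hc : 0 < c by rewrite invr_gt0 exprn_gt0.
set T := \sum_(v1 : 'I_x.+1) \sum_(v2 : 'I_x.+1) c * ((maxn v1 v2)%:R * d / 2).
have hmax : forall v1 v2 : 'I_x.+1,
    Num.max (grid V (beta v1)) (grid V (beta v2)) = (maxn (beta v1) (beta v2))%:R * d.
  move=> v1 v2; rewrite /grid -/d maxEle ler_pM2r // ler_nat.
  by case: (leqP (beta v1) (beta v2)).
have hET : `|exp_highest_bid V beta - T| <= d / 2.
  rewrite /exp_highest_bid /T -sumrB.
  apply: (le_trans (ler_norm_sum _ _ _)).
  apply: (@le_trans _ _ (\sum_(v1 : 'I_x.+1) \sum_(v2 : 'I_x.+1) c * (d / 2))).
    apply: ler_sum => v1 _; rewrite -sumrB.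
    apply: (le_trans (ler_norm_sum _ _ _)).
    apply: ler_sum => v2 _.
    rewrite hmax -/c -mulrBr normrM gtr0_norm // ler_pM2l //.
    have [a1 a2] := eq_bound hV hx heq v1.
    have [b1 b2] := eq_bound hV hx heq v2.
    set m := maxn (beta v1) (beta v2).
    set M := maxn v1 v2.
    have h1 : (muln 2 m <= addn M 1)%N.
      rewrite /m /M; case: (leqP (beta v1) (beta v2)); case: (leqP v1 v2); lia.
    have h2 : (M <= addn (muln 2 m) 1)%N.
      rewrite /m /M; case: (leqP (beta v1) (beta v2)); case: (leqP v1 v2); lia.
    have h1' : (2%:R * m%:R <= M%:R + 1%:R :> R) by rewrite -natrM -natrD ler_nat.
    have h2' : (M%:R <= 2%:R * m%:R + 1%:R :> R) by rewrite -natrM -natrD ler_nat.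
    rewrite ler_norml; apply/andP; split; nra.
  by rewrite !sumr_const !card_ord /c /n aux1'.
set S := (\sum_(v1 < x.+1) \sum_(v2 < x.+1) maxn v1 v2)%N.
have hS6 : (muln 6 S = muln (muln x x.+1) (addn (muln 4 x) 5)).
  rewrite /S -summax big_mkord; congr muln; apply: eq_bigr => i _.
  by rewrite big_mkord.
have hSR : 6 * (S%:R : R) = x%:R * (x%:R + 1) * (4 * x%:R + 5).
  have := congr1 (fun k => k%:R : R) hS6; rewrite /= !natrM !natrD.
  move=> h; rewrite h -addn1 natrD; ring.
have hx0 : (0 : R) < x%:R by rewrite ltr0n.
have hT : T = V / 3 + V / (12 * (x%:R + 1)).
  transitivity (c * (d / 2) * (S%:R)).
    rewrite /S natr_sum mulr_sumr; apply: eq_bigr => v1 _.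
    rewrite natr_sum mulr_sumr; apply: eq_bigr => v2 _.
    ring.
  rewrite /c /n /d -addn1 natrD.
  exact: aux2.
have hTV : `|T - V / 3| = V / (12 * (x%:R + 1)).
  rewrite hT addrAC subrr add0r ger0_norm //.
  by apply: divr_ge0; [apply: ltW | apply: mulr_ge0; lra].
apply: (le_trans (ler_distD T _ _)).
rewrite hTV.
have := aux3 hV hx0; rewrite -/d.
move: hET; set e := `|_ - T|; set f := V / _; lra.
Qed.

Local Open Scope classical_set_scope.

Lemma conv (R : realType) (V : R) (l : R) (u : nat -> R) : 0 < V ->
  (forall x, (0 < x)%N -> `|u x - l| <= V / x%:R) -> u @ \oo --> (l : R^o).
Proof.
move=> hV hb; apply/cvgrPdist_le => e he.
have := nbhs_infty_gtr (V / e); apply: filterS => k hk.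
have hVe : 0 < V / e by rewrite divr_gt0.
have hk0 : (0 < k)%N by rewrite -(ltr0n R); apply: lt_trans hk.
rewrite distrC; apply: le_trans (hb k hk0) _.
have hkR : (0 : R) < k%:R by rewrite ltr0n.
rewrite ler_pdivrMr //; move: hk; rewrite ltr_pdivrMr // => hk.
by rewrite mulrC ltW.
Qed.

Unset Implicit Arguments.
Theorem corollary6 (R : realType) (V : R) (hV : 0 < V) :
  (forall (x : nat) (beta : strategy x), (0 < x)%N ->
     sym_equilibrium V beta ->
     forall v : 'I_x.+1, `|grid V (beta v) - grid V v / 2| <= (V / x%:R) / 2)
  /\
  (forall B : forall x : nat, strategy x,
     (forall x : nat, (0 < x)%N -> sym_equilibrium V (B x)) ->
     (fun x : nat => exp_highest_bid V (B x)) @ \oo --> (V / 3 : R^o)).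
Proof.
split.
  by move=> x beta hx heq v; apply: part1.
move=> B hB; apply: (conv hV) => x hx.
exact: ehb_bound hV hx (hB x hx).
Qed.
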